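(* Let $R$ be an associative ring with identity and $M$ a left $R$-module which is projective in $\sigma[M]$. Then the set of points $pt(SP(M))$ of the frame $SP(M)$ equals $Spec(\Lambda^{fi}(M))$.
   Context: $\Lambda^{fi}(M)$ is the set of fully invariant submodules of $M$. For $N,L\leq M$, $N_ML=\sum\{f(N)\mid f\in\mathrm{Hom}_R(M,L)\}$. A submodule $N\in\Lambda^{fi}(M)$, $N\neq M$, is semiprime in $M$ if $K\in\Lambda^{fi}(M)$ and $K_MK\subseteq N$ imply $K\subseteq N$. $SP(M)$ is the set of semiprime submodules of $M$ together with $M$, ordered by inclusion; it is a frame. For a frame $F$ with top $1$, $pt(F)$ is the set of $p\in F$, $p\neq 1$, such that $x\wedge y\leq p$ implies $x\leq p$ or $y\leq p$. $Spec(\Lambda^{fi}(M))$ is the set of $Q\in\Lambda^{fi}(M)$, $Q\neq M$, such that for all $N,L\in\Lambda^{fi}(M)$, $N_ML\subseteq Q$ implies $N\subseteq Q$ or $L\subseteq Q$. *)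

(* Defs.v *)
From HB Require Import structures.
From mathcomp Require Import all_boot all_algebra.
Import GRing.Theory.
Set Implicit Arguments. Unset Strict Implicit. Unset Printing Implicit Defensive.
Local Open Scope ring_scope.

Definition Rlinear (R : pzRingType) (A B : lmodType R) (f : A -> B) : Prop :=
  forall (a : R) (x y : A), f (a *: x + y) = a *: f x + f y.

Definition psubset (T : Type) (N L : T -> Prop) : Prop := forall x, N x -> L x.

Definition submod (R : pzRingType) (M : lmodType R) (N : M -> Prop) : Prop :=
  N 0 /\ (forall (a : R) (x y : M), N x -> N y -> N (a *: x + y)).

Definition generated_by (R : pzRingType) (M : lmodType R) (S : M -> Prop) : M -> Prop :=
  fun x => forall K : M -> Prop, submod K -> psubset S K -> K x.

(* f in Hom_R(M, L), viewed as an endomorphism of M with image inside L *)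
Definition hom_into (R : pzRingType) (M : lmodType R) (L : M -> Prop) (f : M -> M) : Prop :=
  Rlinear f /\ (forall x, L (f x)).

(* N_M L = sum { f(N) | f in Hom_R(M, L) } *)
Definition prod_sub (R : pzRingType) (M : lmodType R) (N L : M -> Prop) : M -> Prop :=
  generated_by (fun y => exists (f : M -> M) (x : M), hom_into L f /\ N x /\ y = f x).

Definition fully_inv (R : pzRingType) (M : lmodType R) (N : M -> Prop) : Prop :=
  submod N /\ (forall f : M -> M, Rlinear f -> forall x, N x -> N (f x)).

Definition proper (T : Type) (N : T -> Prop) : Prop := ~ (forall x, N x).

Definition semiprime (R : pzRingType) (M : lmodType R) (N : M -> Prop) : Prop :=
  fully_inv N /\ proper N /\
  (forall K : M -> Prop, fully_inv K -> psubset (prod_sub K K) N -> psubset K N).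

Definition SP (R : pzRingType) (M : lmodType R) (N : M -> Prop) : Prop :=
  semiprime N \/ (forall x, N x).

Definition is_meet (T : Type) (S : (T -> Prop) -> Prop) (x y z : T -> Prop) : Prop :=
  S z /\ psubset z x /\ psubset z y /\
  (forall w, S w -> psubset w x -> psubset w y -> psubset w z).

(* pt(SP(M)); the top element 1 of SP(M) is M *)
Definition pt_SP (R : pzRingType) (M : lmodType R) (p : M -> Prop) : Prop :=
  SP p /\ proper p /\
  (forall x y z : M -> Prop, SP x -> SP y -> is_meet (@SP R M) x y z ->
     psubset z p -> psubset x p \/ psubset y p).

Definition spec_fi (R : pzRingType) (M : lmodType R) (Q : M -> Prop) : Prop :=
  fully_inv Q /\ proper Q /\
  (forall N L : M -> Prop, fully_inv N -> fully_inv L ->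
     psubset (prod_sub N L) Q -> psubset N Q \/ psubset L Q).

Definition M_generated (R : pzRingType) (M X : lmodType R) : Prop :=
  forall x : X, generated_by (fun y => exists (f : M -> X) (m : M), Rlinear f /\ y = f m) x.

Definition in_sigma (R : pzRingType) (M N : lmodType R) : Prop :=
  exists (X : lmodType R) (i : N -> X),
    Rlinear i /\ (forall u v, i u = i v -> u = v) /\ M_generated M X.

Definition projective_in_sigma (R : pzRingType) (M : lmodType R) : Prop :=
  forall A B : lmodType R, in_sigma M A -> in_sigma M B ->
  forall g : A -> B, Rlinear g -> (forall b, exists a, g a = b) ->
  forall f : M -> B, Rlinear f ->
  exists h : M -> A, Rlinear h /\ (forall x, g (h x) = f x).

(* Main.v *)
From HB Require Import structures.
Require Import Defs.
From mathcomp Require Import all_boot all_algebra.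
From mathcomp Require Import boolp functions.
Import GRing.Theory.
Set Implicit Arguments. Unset Strict Implicit. Unset Printing Implicit Defensive.
Local Open Scope ring_scope.

Record subM (R : pzRingType) (V : lmodType R) (P : V -> Prop) (hP : submod P) :=
  SubM { sval : V; sprop : P sval }.
Arguments SubM {R V P hP} sval sprop.
Arguments sval {R V P hP}.
Arguments sprop {R V P hP}.
Section SubMod.
Variables (R : pzRingType) (V : lmodType R) (P : V -> Prop) (hP : submod P).
Local Notation subM := (subM hP).
HB.instance Definition _ := gen_eqMixin subM.
HB.instance Definition _ := gen_choiceMixin subM.
Lemma sval_inj (u v : subM) : sval u = sval v -> u = v.
Proof. case: u => x px; case: v => y py /= exy; subst y.
by rewrite (Prop_irrelevance px py). Qed.
Lemma P0 : P 0. Proof. by case: hP. Qed.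
Lemma PZD a x y : P x -> P y -> P (a *: x + y). Proof. by case: hP => _; apply. Qed.
Lemma PD x y : P x -> P y -> P (x + y).
Proof. by move=> hx hy; have := PZD 1 hx hy; rewrite scale1r. Qed.
Lemma PZ a x : P x -> P (a *: x).
Proof. by move=> hx; have := PZD a hx P0; rewrite addr0. Qed.
Lemma PN x : P x -> P (- x).
Proof. by move=> hx; have := PZ (-1) hx; rewrite scaleN1r. Qed.
Definition s0 : subM := SubM 0 P0.
Definition sadd (u v : subM) : subM := SubM _ (PD (sprop u) (sprop v)).
Definition sopp (u : subM) : subM := SubM _ (PN (sprop u)).
Definition sscale a (u : subM) : subM := SubM _ (PZ a (sprop u)).
Lemma saddA : associative sadd. Proof. by move=> ???; apply: sval_inj; rewrite /= addrA. Qed.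
Lemma saddC : commutative sadd. Proof. by move=> ??; apply: sval_inj; rewrite /= addrC. Qed.
Lemma sadd0 : left_id s0 sadd. Proof. by move=> ?; apply: sval_inj; rewrite /= add0r. Qed.
Lemma saddN : left_inverse s0 sopp sadd. Proof. by move=> ?; apply: sval_inj; rewrite /= addNr. Qed.
HB.instance Definition _ := GRing.isZmodule.Build subM saddA saddC sadd0 saddN.
Lemma sscaleA a b v : sscale a (sscale b v) = sscale (a * b) v.
Proof. by apply: sval_inj; rewrite /= scalerA. Qed.
Lemma sscale1 : left_id 1 sscale. Proof. by move=> ?; apply: sval_inj; rewrite /= scale1r. Qed.
Lemma sscaleDr : right_distributive sscale +%R. Proof. by move=> ???; apply: sval_inj; rewrite /= scalerDr. Qed.
Lemma sscaleDl v : {morph sscale^~ v : a b / a + b}. Proof. by move=> ??; apply: sval_inj; rewrite /= scalerDl. Qed.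
HB.instance Definition _ := GRing.Zmodule_isLmodule.Build R subM sscaleA sscale1 sscaleDr sscaleDl.
Lemma sval_lin : Rlinear (sval : subM -> V). Proof. by []. Qed.
Lemma sval_sum (J : Type) (s : seq J) (G : J -> subM) :
  sval (\sum_(j <- s) G j) = \sum_(j <- s) sval (G j).
Proof. by elim: s => [|j s IH]; rewrite ?big_nil ?big_cons //= IH. Qed.
End SubMod.

Section Gen.
Variables (R : pzRingType) (M : lmodType R).
Implicit Types (N L K S Q G : M -> Prop) (f g : M -> M).

Lemma lin0 (A B : lmodType R) (f : A -> B) : Rlinear f -> f 0 = 0.
Proof.
move=> hf; have h := hf 1 0 0; rewrite !scale1r addr0 in h.
have := congr1 (fun z => z - f 0) h; rewrite /= subrr addrK => h2.
by rewrite -h2.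
Qed.

Lemma linZ (A B : lmodType R) (f : A -> B) a x : Rlinear f -> f (a *: x) = a *: f x.
Proof. by move=> hf; have := hf a x 0; rewrite addr0 lin0 // addr0. Qed.

Lemma linD (A B : lmodType R) (f : A -> B) x y : Rlinear f -> f (x + y) = f x + f y.
Proof. by move=> hf; have := hf 1 x y; rewrite !scale1r. Qed.

Lemma lin_comp (A B C : lmodType R) (f : B -> C) (g : A -> B) :
  Rlinear f -> Rlinear g -> Rlinear (fun x => f (g x)).
Proof. by move=> hf hg a x y; rewrite hg hf. Qed.

Lemma sub0 N : submod N -> N 0. Proof. by case. Qed.
Lemma subZD N a x y : submod N -> N x -> N y -> N (a *: x + y).
Proof. by case=> _; apply. Qed.
Lemma subD N x y : submod N -> N x -> N y -> N (x + y).
Proof. by move=> hN hx hy; have := subZD 1 hN hx hy; rewrite scale1r. Qed.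

Lemma sub_sum N (I : Type) (s : seq I) (F : I -> M) :
  submod N -> (forall i, N (F i)) -> N (\sum_(i <- s) F i).
Proof.
move=> hN hF; elim: s => [|i s IH]; first by rewrite big_nil; apply: sub0.
by rewrite big_cons; apply: subD.
Qed.

Lemma gen_sub G : submod (generated_by G).
Proof.
split; first by move=> K [] .
by move=> a x y hx hy K hK hGK; apply: subZD => //; [apply: hx | apply: hy].
Qed.

Lemma gen_in G x : G x -> generated_by G x.
Proof. by move=> hx K _; apply. Qed.

Lemma gen_min G K : submod K -> psubset G K -> psubset (generated_by G) K.
Proof. by move=> hK hGK x; apply. Qed.

Lemma gen_fi G : (forall f, Rlinear f -> forall y, G y -> G (f y)) ->
  fully_inv (generated_by G).
Proof.
move=> hG; split; first exact: gen_sub.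
move=> f hf x hx.
have hK : submod (fun m => generated_by G (f m)).
  split; first by rewrite lin0 //; apply: sub0; apply: gen_sub.
  by move=> a u v hu hv; rewrite hf; exact: (subZD a (gen_sub G) hu hv).
have hGK : psubset G (fun m => generated_by G (f m)).
  by move=> y hy; apply: gen_in; apply: hG.
exact: (hx _ hK hGK).
Qed.

Lemma prod_fi N L : fully_inv L -> fully_inv (prod_sub N L).
Proof.
move=> [hL hLf]; apply: gen_fi => f hf y [g [x [[hg hgL] [hx ->]]]].
exists (fun m => f (g m)), x; split=> //; split; first exact: lin_comp.
by move=> m; apply: hLf.
Qed.

Lemma prod_le_L N L : submod L -> psubset (prod_sub N L) L.
Proof. by move=> hL; apply: gen_min => // y [g [x [[_ hg] [_ ->]]]]. Qed.

Lemma prod_le_N N L : fully_inv N -> psubset (prod_sub N L) N.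
Proof. by move=> [hN hNf]; apply: gen_min => // y [g [x [[hg _] [hx ->]]]]; apply: hNf. Qed.

Lemma prod_gen N L f x : hom_into L f -> N x -> prod_sub N L (f x).
Proof. by move=> hf hx; apply: gen_in; exists f, x. Qed.

Definition closed N := forall K, fully_inv K -> psubset (prod_sub K K) N -> psubset K N.

Lemma SP_iff N : SP N <-> fully_inv N /\ closed N.
Proof.
split.
- case=> [[hfi [_ hc]] | hall]; first by [].
  split; last by move=> K _ _ x _; apply: hall.
  split; first by split=> *; apply: hall.
  by move=> *; apply: hall.
- move=> [hfi hc]; case: (lem (forall x, N x)) => h; first by right.
  by left; split=> //; split.
Qed.

End Gen.

Section Main.
Variables (R : pzRingType) (M : lmodType R).
Implicit Types (N L K S Q G : M -> Prop) (f g : M -> M).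

Definition col Q S : M -> Prop := fun m => forall f, hom_into S f -> Q (f m).

Lemma col_fi Q S : fully_inv Q -> fully_inv (col Q S).
Proof.
move=> [hQ hQf]; split; first split.
- by move=> f [hf _]; rewrite lin0 //; apply: sub0.
- move=> a x y hx hy f [hf hfS]; rewrite hf; apply: subZD => //.
  + exact: hx. + exact: hy.
- move=> g hg x hx f [hf hfS]; apply: (hx (fun m => f (g m))).
  by split; [apply: lin_comp | move=> m; apply: hfS].
Qed.

Lemma inter_fi N L : fully_inv N -> fully_inv L -> fully_inv (fun m => N m /\ L m).
Proof.
move=> [hN hNf] [hL hLf]; split; first split.
- by split; apply: sub0.
- by move=> a x y [? ?] [? ?]; split; apply: subZD.
- by move=> f hf x [? ?]; split; [apply: hNf | apply: hLf].
Qed.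

Lemma inter_closed N L : closed N -> closed L -> closed (fun m => N m /\ L m).
Proof.
move=> hN hL K hK hKK m hm; split.
- by apply: (hN K hK) => // z /hKK [].
- by apply: (hL K hK) => // z /hKK [].
Qed.

Lemma SP_inter N L : SP N -> SP L -> SP (fun m => N m /\ L m).
Proof.
move=> /SP_iff [h1 h2] /SP_iff [h3 h4]; apply/SP_iff; split.
  exact: inter_fi. exact: inter_closed.
Qed.

Hypothesis key : forall Q S, fully_inv Q -> closed Q -> fully_inv S -> closed (col Q S).

Theorem main_thm N : pt_SP N <-> spec_fi N.
Proof.
split.
- move=> [hSP [hprop hpt]]; have [hQfi hQc] := (SP_iff N).1 hSP.
  split=> //; split=> // N' L hN hL hNL.
  pose x := col N L; pose y := col N x.
  have hxfi : fully_inv x := col_fi L hQfi.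
  have hyfi : fully_inv y := col_fi x hQfi.
  have hxc : closed x := key hQfi hQc hL.
  have hyc : closed y := key hQfi hQc hxfi.
  have hNx : psubset N' x by move=> n hn f hf; apply: hNL; exact: prod_gen.
  have hLy : psubset L y.
    move=> l hl f [hf hfx].
    have hP : psubset (prod_sub L x) N.
      apply: hQc; first by apply: prod_fi.
      apply: gen_min; first by case: hQfi.
      move=> z [h [p [[hh hhP] [hp ->]]]].
      have px : x p by apply: (prod_le_L (proj1 hxfi)) hp.
      apply: px; split=> // m; exact: (prod_le_N hL (hhP m)).
    by apply: hP; apply: prod_gen hl.
  have hxy : psubset (fun m => x m /\ y m) N.
    apply: hQc; first exact: inter_fi.
    apply: gen_min; first by case: hQfi.
    move=> z [h [k [[hh hhK] [[kx ky] ->]]]].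
    by apply: ky; split=> // m; exact: (hhK m).1.
  have SPx : SP x by apply/SP_iff.
  have SPy : SP y by apply/SP_iff.
  have hmeet : is_meet (@SP R M) x y (fun m => x m /\ y m).
    split; first exact: SP_inter.
    split; first by move=> m [].
    split; first by move=> m [].
    by move=> w _ h1 h2 m hm; split; [apply: h1 | apply: h2].
  case: (hpt x y _ SPx SPy hmeet hxy) => h; [left|right] => m hm; apply: h.
    exact: hNx. exact: hLy.
- move=> [hfi [hprop hprime]].
  have hc : closed N.
    by move=> K hK hKK; case: (hprime K K hK hK hKK).
  split; first by apply/SP_iff.
  split=> // x y z hx hy [hz [hzx [hzy hmax]]] hzQ.
  have [xfi _] := (SP_iff x).1 hx.
  have [yfi _] := (SP_iff y).1 hy.
  apply: hprime => // m hm; apply: hzQ.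
  apply: (hmax _ (SP_inter hx hy)); [by move=> ? [] | by move=> ? [] |].
  split; first exact: prod_le_N xfi _ hm.
  exact: prod_le_L (proj1 yfi) _ hm.
Qed.
End Main.

Section Key.
Variables (R : pzRingType) (M : lmodType R).
Hypothesis hproj : projective_in_sigma M.
Variables (Q S K : M -> Prop).
Hypotheses (hQfi : fully_inv Q) (hSfi : fully_inv S) (hKfi : fully_inv K).
Hypothesis hKK : psubset (prod_sub K K) (col Q S).

Definition I := {classic {g : M -> M | hom_into S g}}.
Definition GI (i : I) : M -> M := proj1_sig i.
Lemma GI_hom i : hom_into S (GI i). Proof. exact: proj2_sig i. Qed.
Lemma GI_lin i : Rlinear (GI i). Proof. exact: (GI_hom i).1. Qed.

Definition F := I -> M.
Lemma fE a (phi psi : F) i : (a *: phi + psi) i = a *: phi i + psi i.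
Proof. by []. Qed.

Definition cover (phi : F) (s : seq I) := forall i, phi i != 0 -> i \in s.
Definition finsupp (phi : F) := exists s, cover phi s.
Definition PA (phi : F) := finsupp phi /\ forall i, K (phi i).

Lemma finsupp_uniq phi : finsupp phi -> exists s, uniq s /\ cover phi s.
Proof.
move=> [s hs]; exists (undup s); split; first exact: undup_uniq.
by move=> i /hs; rewrite mem_undup.
Qed.

Lemma sum_indep phi s1 s2 : uniq s1 -> uniq s2 -> cover phi s1 -> cover phi s2 ->
  \sum_(i <- s1) GI i (phi i) = \sum_(i <- s2) GI i (phi i).
Proof.
move=> u1 u2 c1 c2.
have E s : \sum_(i <- s) GI i (phi i) =
    \sum_(i <- [seq i <- s | phi i != 0]) GI i (phi i).
  rewrite big_filter [RHS]big_mkcond; apply: eq_bigr => i _ /=.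
  by have [->|] := eqVneq (phi i) 0; rewrite ?lin0 //; apply: GI_lin.
rewrite (E s1) (E s2); apply: perm_big; apply: uniq_perm; rewrite ?filter_uniq //.
move=> i; rewrite !mem_filter; have [h|h] := eqVneq (phi i) 0 => //=.
by rewrite (c1 _ h) (c2 _ h).
Qed.

Definition sigma (phi : F) : M :=
  match pselect (exists s, uniq s /\ cover phi s) with
  | left ex => \sum_(i <- proj1_sig (cid ex)) GI i (phi i)
  | right _ => 0
  end.

Lemma sigmaE phi s : uniq s -> cover phi s -> sigma phi = \sum_(i <- s) GI i (phi i).
Proof.
move=> us cs; rewrite /sigma; case: pselect => [ex|nex].
  by case: cid => s' [us' cs'] /=; apply: sum_indep.
by exfalso; apply: nex; exists s.
Qed.

Lemma sigma_lin a phi psi : finsupp phi -> finsupp psi ->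
  sigma (a *: phi + psi) = a *: sigma phi + sigma psi.
Proof.
move=> [s1 c1] [s2 c2]; pose s := undup (s1 ++ s2).
have us : uniq s by apply: undup_uniq.
have cphi : cover phi s by move=> i /c1 h; rewrite mem_undup mem_cat h.
have cpsi : cover psi s by move=> i /c2 h; rewrite mem_undup mem_cat h orbT.
have cz : cover (a *: phi + psi) s.
  move=> i; have [h1|h1] := eqVneq (phi i) 0; last by move=> _; apply: cphi.
  have [h2|h2] := eqVneq (psi i) 0; last by move=> _; apply: cpsi.
  by rewrite fE h1 h2 scaler0 addr0 eqxx.
rewrite !(sigmaE us) // scaler_sumr -big_split; apply: eq_bigr => i _; rewrite fE.
exact: GI_lin.
Qed.

Lemma hFS : submod finsupp.
Proof.
split; first by exists [::] => i; rewrite eqxx.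
move=> a phi psi [s1 c1] [s2 c2]; exists (s1 ++ s2) => i.
have [h1|h1] := eqVneq (phi i) 0; last by move=> _; rewrite mem_cat c1.
have [h2|h2] := eqVneq (psi i) 0; last by move=> _; rewrite mem_cat c2 ?orbT.
by rewrite fE h1 h2 scaler0 addr0 eqxx.
Qed.

Lemma hPA : submod PA.
Proof.
split; first by split; [apply: (sub0 hFS) | move=> i; apply: (sub0 (proj1 hKfi))].
move=> a phi psi [f1 k1] [f2 k2]; split; first exact: subZD hFS f1 f2.
by move=> i; apply: (subZD a (proj1 hKfi)).
Qed.

Definition T := prod_sub K S.
Lemma hT : submod T. Proof. exact: gen_sub. Qed.

Definition A := subM hPA.
Definition B := subM hT.
Definition X := subM hFS.

Lemma sigma_T phi : PA phi -> T (sigma phi).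
Proof.
move=> [/finsupp_uniq [s [us cs]] hk]; rewrite (sigmaE us cs).
by apply: sub_sum hT _ => i; apply: prod_gen (GI_hom i) (hk i).
Qed.

Definition pi (a : A) : B := SubM (sigma (sval a)) (sigma_T (sprop a)).

Lemma pi_lin : Rlinear pi.
Proof.
move=> a u v; apply: sval_inj => /=.
exact: sigma_lin (proj1 (sprop u)) (proj1 (sprop v)).
Qed.

Definition delta (i0 : I) (m : M) : F := fun i => if i == i0 then m else 0.

Lemma delta_fs i0 m : finsupp (delta i0 m).
Proof.
exists [:: i0] => i; rewrite /delta.
by have [->|_] := eqVneq i i0; [rewrite mem_seq1 eqxx | rewrite eqxx].
Qed.

Lemma sigma_delta i0 m : sigma (delta i0 m) = GI i0 m.
Proof.
rewrite (@sigmaE _ [:: i0]) //; last first.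
  by move=> i; rewrite /delta; have [->|_] := eqVneq i i0; [rewrite mem_seq1 eqxx | rewrite eqxx].
by rewrite big_seq1 /delta eqxx.
Qed.

Lemma T_im t : T t -> exists phi, PA phi /\ sigma phi = t.
Proof.
move=> ht; pose Im := fun t => exists phi, PA phi /\ sigma phi = t.
have hIm : submod Im.
  split.
    exists 0; split; first exact: (sub0 hPA).
    by rewrite (@sigmaE _ [::]) // ?big_nil // => i; rewrite eqxx.
  move=> a x y [p1 [h1 e1]] [p2 [h2 e2]]; exists (a *: p1 + p2); split.
    exact: (subZD a hPA h1 h2).
  by rewrite sigma_lin ?e1 ?e2 //; [apply: h1.1 | apply: h2.1].
have hG : psubset (fun y => exists f x, hom_into S f /\ K x /\ y = f x) Im.
  move=> z [g [k [hg [hk ->]]]].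
  pose i0 : I := exist _ g hg.
  exists (delta i0 k); split; last by rewrite sigma_delta.
  split; first exact: delta_fs.
  by move=> i; rewrite /delta; case: eqVneq => _ //; apply: (sub0 (proj1 hKfi)).
exact: (gen_min hIm hG ht).
Qed.

Lemma pi_surj (b : B) : exists a, pi a = b.
Proof.
case: b => t ht; have [phi [hphi e]] := T_im ht.
by exists (SubM phi hphi : A); apply: sval_inj => /=.
Qed.


Definition dX (i0 : I) (m : M) : X := SubM (delta i0 m) (delta_fs i0 m).

Lemma dX_lin i0 : Rlinear (dX i0).
Proof.
move=> a x y; apply: sval_inj => /=; apply: funext => i.
rewrite fE /delta; case: eqVneq => _ //.
by rewrite scaler0 addr0.
Qed.

Lemma X_gen : M_generated M X.
Proof.
move=> x.
have [s [us cs]] := finsupp_uniq (sprop x).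
have -> : x = \sum_(i <- s) dX i (sval x i).
  apply: sval_inj; rewrite sval_sum; apply: funext => j.
  rewrite fct_sumE /= /delta.
  have [js|jns] := boolP (j \in s).
    by rewrite (bigD1_seq j) //= eqxx big1 ?addr0 // => i; rewrite eq_sym => /negPf ->.
  rewrite big1_seq; last first.
    by move=> i /andP [_ ins]; case: eqVneq => // e; rewrite e ins in jns.
  by have [//|/cs] := eqVneq (sval x j) 0; rewrite (negPf jns).
apply: (sub_sum _ (gen_sub _)).
by move=> i; apply: gen_in; exists (dX i), (sval x i); split=> //; apply: dX_lin.
Qed.

Lemma A_sigma : in_sigma M A.
Proof.
exists X, (fun a : A => SubM (sval a) (proj1 (sprop a)) : X); split.
  by move=> a u v; apply: sval_inj.
split; last exact: X_gen.
by move=> u v /(congr1 sval) /= /sval_inj.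
Qed.

Lemma B_sigma : in_sigma M B.
Proof.
exists M, (fun b : B => sval b); split; first by [].
split; first by move=> u v /sval_inj.
by move=> x; apply: gen_in; exists id, x.
Qed.

Lemma claim h : hom_into T h -> forall k, K k -> Q (h k).
Proof.
move=> [hh hhT] k hk.
pose hB := fun m => (SubM (h m) (hhT m) : B).
have hBl : Rlinear hB by move=> a x y; apply: sval_inj => /=; apply: hh.
have [ht [htl htE]] := hproj A_sigma B_sigma pi_lin pi_surj hBl.
have -> : h k = sigma (sval (ht k)) by rewrite -[h k]/(sval (hB k)) -htE.
have [s [us cs]] := finsupp_uniq (proj1 (sprop (ht k))).
rewrite (sigmaE us cs); apply: sub_sum; first exact: (proj1 hQfi).
move=> i; pose p := fun m => sval (ht m) i.
have hp : hom_into K p.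
  split; last by move=> m; exact: (proj2 (sprop (ht m))).
  by move=> a x y; rewrite /p htl.
by apply: (hKK (prod_gen hp hk)); apply: GI_hom.
Qed.
End Key.

Lemma key_closed (R : pzRingType) (M : lmodType R) (hproj : projective_in_sigma M)
  (Q S : M -> Prop) : fully_inv Q -> closed Q -> fully_inv S -> closed (col Q S).
Proof.
move=> hQfi hQc hSfi K hKfi hKK.
have hTQ : psubset (prod_sub K S) Q.
  apply: hQc; first exact: prod_fi.
  apply: gen_min; first exact: (proj1 hQfi).
  move=> z [h [t [hh [ht ->]]]].
  apply: (claim hproj hQfi hKfi hKK hh).
  exact: (prod_le_N hKfi ht).
by move=> k hk f hf; apply: hTQ; apply: prod_gen hf hk.
Qed.

Theorem proposition4p29 (R : pzRingType) (M : lmodType R) :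
  projective_in_sigma M ->
  forall N : M -> Prop, pt_SP N <-> spec_fi N.
Proof.
move=> hproj N; apply: main_thm.
exact: key_closed hproj.
Qed.
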